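(* A connected component $B^\ell$ of nonabsorbing action profiles is rectangular if and only if there is no joint exit at any mixed action profile in $X^\ell$, i.e., ${\cal E}_J(x)=\emptyset$ for all $x\in X^\ell$.
   Context: $I$ is a finite set of players, $A_i$ finite nonempty action sets, $A=\prod_iA_i$, $p:A\to[0,1]$. $B=\{a\in A:p(a)=0\}$; the connected components $B^1,\dots,B^L$ of nonabsorbing action profiles are the connected components of the graph on $B$ in which $a,a'$ are adjacent iff $a_{-i}=a'_{-i}$ for some $i\in I$. $B^\ell$ is rectangular if $B^\ell=\prod_{i\in I}B^\ell_i$ for some $B^\ell_i\subseteq A_i$. Let $\Xi=\prod_i\Delta(A_i)$, $p(x)=\sum_ap(a)\prod_jx_j(a_j)$ (multilinear extension), and $X^\ell:=\{x\in\Xi:\prod_i{\rm supp}(x_i)\subseteq B^\ell\}$. For $x\in X^\ell$, a pair $(J,a_J)$ with $\emptyset\ne J\subseteq I$, $a_J\in\prod_{i\in J}A_i$ is an exit at $x$ if $p(a_J,x_{-J})>0$ and $p(a_{J'},x_{-J'})=0$ for every proper subset $J'\subsetneq J$; it is a joint exit if $|J|\ge2$. ${\cal E}_J(x)$ is the set of joint exits at $x$. *)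

(* Defs.v *)
From HB Require Import structures.
From mathcomp Require Import all_boot all_order all_algebra.
Set Implicit Arguments. Unset Strict Implicit. Unset Printing Implicit Defensive.
Import Order.TTheory GRing.Theory Num.Theory.
Local Open Scope ring_scope.

Section Defs.
Variables (I : finType) (A : I -> finType) (R : realFieldType).

Definition profile := {dffun forall i : I, A i}.

Definition mixed_profile (x : forall i : I, A i -> R) : Prop :=
  forall i, (forall ai, 0 <= x i ai) /\ \sum_(ai : A i) x i ai = 1.

Definition pext (p : profile -> R) (x : forall i : I, A i -> R) : R :=
  \sum_(a : profile) p a * \prod_(j : I) x j (a j).

Definition deviate (J : {set I}) (a : profile) (x : forall i : I, A i -> R)
  : forall i : I, A i -> R :=
  fun i => if i \in J then (fun b : A i => (b == a i)%:R) else x i.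

Definition adjB (p : profile -> R) : rel profile :=
  fun a a' => [&& p a == 0, p a' == 0 &
     [exists i : I, [forall j : I, (j != i) ==> (a j == a' j)]]].

Definition component (p : profile -> R) (a0 : profile) : {set profile} :=
  [set a | connect (adjB p) a0 a].

Definition rectangular (C : {set profile}) : Prop :=
  exists Bi : forall i : I, {set A i},
    forall a : profile, a \in C <-> (forall i, a i \in Bi i).

Definition X_of (C : {set profile}) (x : forall i : I, A i -> R) : Prop :=
  mixed_profile x /\
  forall a : profile, (forall i, 0 < x i (a i)) -> a \in C.

(* (J, a_J) is an exit at x; a_J is represented by a full profile a whose
   coordinates outside J are irrelevant *)
Definition is_exit (p : profile -> R) (x : forall i : I, A i -> R)
  (J : {set I}) (a : profile) : Prop :=
  J != set0 /\ 0 < pext p (deviate J a x) /\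
  forall J' : {set I}, J' \proper J -> pext p (deviate J' a x) = 0.

Definition is_joint_exit p x J a : Prop := is_exit p x J a /\ (2 <= #|J|)%N.

End Defs.

(* Main.v *)
Require Import Defs.
From HB Require Import structures.
From mathcomp Require Import all_boot all_order all_algebra.
From mathcomp Require Import lra zify.
Set Implicit Arguments. Unset Strict Implicit. Unset Printing Implicit Defensive.
Import Order.TTheory GRing.Theory Num.Theory.
Local Open Scope ring_scope.

Section H.
Variables (I : finType) (A : I -> finType) (R : realFieldType).
Variables (p : profile A -> R) (a0 : profile A).
Hypothesis hp : forall a, 0 <= p a <= 1.
Hypothesis ha0 : p a0 = 0.
Local Notation C := (component p a0).

Definition mix (K : {set I}) (a b : profile A) : profile A :=
  finfun (fun k => if k \in K then a k else b k).

Lemma mixE K (a b : profile A) k : mix K a b k = if k \in K then a k else b k.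
Proof. by rewrite /mix ffunE. Qed.

Lemma adjB_sym : symmetric (adjB p).
Proof.
suff H : forall u v, adjB p u v -> adjB p v u.
  by move=> u v; apply/idP/idP; apply: H.
move=> u v /and3P [h1 h2 /existsP [i /forallP h]]; rewrite /adjB h1 h2 /=.
apply/existsP; exists i; apply/forallP => j; move: (h j).
by case: (j != i) => //= /eqP ->.
Qed.

Lemma path_p0 x s : p x = 0 -> path (adjB p) x s -> p (last x s) = 0.
Proof.
elim: s x => [//|y s IH] x /= hx /andP [/and3P [_ /eqP hy _] hs]; exact: IH.
Qed.

Lemma inC_p0 (u : profile A) : u \in C -> p u = 0.
Proof. rewrite inE => /connectP [s hs ->]; exact: path_p0. Qed.

Lemma inC_step (u v : profile A) i : u \in C -> p v = 0 ->
  (forall k, k != i -> u k = v k) -> v \in C.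
Proof.
move=> hu hv huv; move: (hu); rewrite !inE => hc; apply: connect_trans hc _.
apply: connect1; rewrite /adjB (inC_p0 hu) hv !eqxx /=.
apply/existsP; exists i; apply/forallP => j; apply/implyP => hj; rewrite huv //.
Qed.

Lemma inC_conn (u v : profile A) : u \in C -> v \in C -> connect (adjB p) u v.
Proof.
rewrite !inE => hu hv; apply: connect_trans hv; rewrite (sym_connect_sym adjB_sym); done.
Qed.

Lemma pext_pure x (t : profile A) : (forall i b, x i b = (b == t i)%:R) -> pext p x = p t.
Proof.
move=> hx; rewrite /pext (bigD1 t) //= [X in _ + X]big1 => [|b hb].
  rewrite addr0 big1 ?mulr1 // => j _; by rewrite hx eqxx.
case: (pickP (fun j => b j != t j)) => [j hj|h].
  by rewrite (bigD1 j) //= hx (negbTE hj) mul0r mulr0.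
by case/eqP: hb; apply/ffunP => j; move: (h j) => /negbFE /eqP.
Qed.

Definition delta (d : profile A) : forall i : I, A i -> R :=
  fun i b => (b == d i)%:R.

Lemma delta_X (d : profile A) : d \in C -> X_of C (delta d).
Proof.
move=> hd; split.
  move=> i; split => [ai|]; first by rewrite /delta ler0n.
  rewrite /delta (bigD1 (d i)) //= eqxx big1 ?addr0 // => b /negbTE ->; done.
move=> a ha; suff -> : a = d by [].
apply/ffunP => i; move: (ha i); rewrite /delta ltr0n; by case: eqP.
Qed.

Lemma pext_dev_delta K (a d : profile A) : pext p (deviate K a (delta d)) = p (mix K a d).
Proof.
apply: pext_pure => i b; rewrite /deviate /delta mixE; by case: (i \in K).
Qed.


Definition NoJE := forall x : forall i : I, A i -> R, X_of C x ->
     forall (J : {set I}) (a : profile A), ~ is_joint_exit p x J a.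

Lemma mix0 (a d : profile A) : mix set0 a d = d.
Proof. by apply/ffunP => k; rewrite mixE inE. Qed.

Lemma P_closed (NE : NoJE) (d : profile A) (hd : d \in C) (J : {set I})
  (a : profile A) (hJ : forall j, j \in J -> mix [set j] a d \in C) :
  mix J a d \in C.
Proof.
suff H : forall n (K : {set I}), (#|K| <= n)%N -> K \subset J -> mix K a d \in C.
  exact: (H #|J|).
elim=> [|n IH] K hK hKJ.
  by move: hK; rewrite leqn0 => /eqP /cards0_eq ->; rewrite mix0.
case: (set_0Vmem K) => [->|[k hk]]; first by rewrite mix0.
have hK' : mix (K :\ k) a d \in C.
  apply: IH; last by apply: subset_trans hKJ; apply: subsetDl.
  by move: hK; rewrite (cardsD1 k K) hk.
have hp0 : p (mix K a d) = 0.
  case: (leqP 2 #|K|) => h2.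
    have /andP [hge _] := hp (mix K a d).
    case: (eqVneq (p (mix K a d)) 0) => // hne; exfalso.
    apply: (NE _ (delta_X hd) K a); split => //; split.
      by apply/set0Pn; exists k.
    split; first by rewrite pext_dev_delta lt_def hne hge.
    move=> K' hK'K; rewrite pext_dev_delta; apply: inC_p0; apply: IH.
      by have := proper_card hK'K; move: hK; clear; lia.
    by apply: subset_trans hKJ; apply: proper_sub.
  have -> : K = [set k].
    apply/eqP; rewrite eq_sym eqEcard sub1set hk cards1; done.
  apply: inC_p0; apply: hJ; exact: (subsetP hKJ).
apply: (inC_step hK' hp0 (i:=k)) => k' hk'; by rewrite !mixE !inE hk'.
Qed.

Lemma PC (NE : NoJE) (d : profile A) (hd : d \in C) (f : profile A) (hf : f \in C)
  K : mix K f d \in C.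
Proof.
have := inC_conn hd hf => /connectP [s hs ->] {hf f}.
elim/last_ind: s hs K => [|s f' IH] hs K.
  by rewrite /= (_ : mix K d d = d) //; apply/ffunP => k; rewrite mixE if_same.
move: hs; rewrite rcons_path last_rcons => /andP [hs1 hadj].
have {}IH := IH hs1; set f := last d s in IH *.
have hfC : f \in C.
  by have := IH [set: I]; rewrite (_ : mix _ _ _ = f) //; apply/ffunP => k; rewrite mixE inE.
move: hadj => /and3P [/eqP hf0 /eqP hf'0 /existsP [i /forallP hi]].
have hi' : forall k, k != i -> f k = f' k by move=> k hk; have := hi k; rewrite hk => /eqP.
have hf'C : f' \in C by exact: (inC_step hfC hf'0 hi').
case hiK: (i \in K); last first.
  rewrite (_ : mix K f' d = mix K f d) //; apply/ffunP => k; rewrite !mixE.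
  case hk: (k \in K) => //; rewrite hi' //; apply/eqP => e; by rewrite -e hk in hiK.
rewrite (_ : mix K f' d = mix (~: K) d f'); last first.
  by apply/ffunP => k; rewrite !mixE inE; case: (k \in K).
apply: P_closed => // j; rewrite inE => hj.
have hji : j != i by apply/eqP => e; by rewrite e hiK in hj.
set a := mix [set i] f' d.
rewrite (_ : mix [set j] d f' = mix [set i; j] a f); last first.
  apply/ffunP => k; rewrite !mixE !inE.
  case: (eqVneq k i) => [->|hki]; first by rewrite /= eq_sym (negbTE hji).
  rewrite /=; case: (eqVneq k j) => [->|hkj] //; by rewrite hi'.
apply: P_closed => // j0; rewrite in_set2 => /orP [] /eqP ->.
  rewrite (_ : mix [set i] a f = f'); first exact: hf'C. apply/ffunP => k; rewrite !mixE !inE.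
  by case: (eqVneq k i) => [->|hki] //; rewrite hi'.
rewrite (_ : mix [set j] a f = mix (~: [set j]) f d); first exact: IH.
apply/ffunP => k; rewrite !mixE !inE; case: (eqVneq k j) => [->|hkj] //=.
by rewrite (negbTE hji).
Qed.


Lemma NE_rect (NE : NoJE) : rectangular C.
Proof.
exists (fun i => [set (u : profile A) i | u in C]) => a; split.
  by move=> ha i; apply: imset_f.
move=> ha.
suff H : forall n (K : {set I}), (#|K| <= n)%N ->
    exists2 u : profile A, u \in C & forall k, k \in K -> u k = a k.
  have [u hu hua] := H _ [set: I] (leqnn _).
  by rewrite (_ : a = u) //; apply/ffunP => k; rewrite hua.
elim=> [|n IH] K hK.
  exists a0 => //; first by rewrite inE connect0.
  by move: hK; rewrite leqn0 => /eqP /cards0_eq -> k; rewrite inE.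
case: (set_0Vmem K) => [->|[k hk]].
  by exists a0 => [|k]; rewrite ?inE ?connect0.
have [u hu hua] : exists2 u : profile A, u \in C & forall k', k' \in K :\ k -> u k' = a k'.
  by apply: IH; move: hK; rewrite (cardsD1 k K) hk.
have /imsetP [e he hek] := ha k.
exists (mix [set k] e u); first exact: PC.
move=> k' hk'; rewrite mixE inE; case: (eqVneq k' k) => [->|hne] //.
by apply: hua; rewrite !inE hne.
Qed.

Lemma rect_NE : rectangular C -> NoJE.
Proof.
move=> [Bi hB] x hx J a [[hJ0 [hpos hprop]] h2].
have [hmix hsupp] := hx.
have ex : forall k, exists s, 0 < x k s.
  move=> k; have [hnn hsum] := hmix k.
  case: (pickP (fun s => 0 < x k s)) => [s hs|hn]; first by exists s.
  exfalso; move: hsum; rewrite big1 => [|s _].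
    by move/eqP; rewrite eq_sym oner_eq0.
  by apply/eqP; rewrite eq_le hnn andbT leNgt hn.
pose y : profile A := finfun (fun k => xchoose (ex k)).
have hy : forall k, 0 < x k (y k) by move=> k; rewrite /y ffunE; exact: (xchooseP (ex k)).
have hyC : y \in C by apply: hsupp.
have hdev_ge0 : forall K j (v : A j), 0 <= deviate K a x v.
  by move=> K j v; rewrite /deviate; case: (j \in K) => //; exact: (proj1 (hmix j)).
pose F K b := p b * \prod_(j : I) deviate K a x (b j).
have hF0 : forall K b, 0 <= F K b.
  move=> K b; apply: mulr_ge0; first by have /andP [] := hp b.
  by apply: prodr_ge0 => j _.
have [b hb] : exists b, 0 < F J b.
  case: (pickP (fun b => 0 < F J b)) => [b hb|hn]; first by exists b.
  exfalso; move: hpos; rewrite /pext ltNge sumr_le0 // => b _.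
  by rewrite leNgt; have := hn b; rewrite /F => ->.
have hpb : p b != 0 by apply/eqP => e; move: hb; rewrite /F e mul0r ltxx.
have hfac : forall j, deviate J a x (b j) != 0.
  move=> j; apply/eqP => e; move: hb; rewrite /F.
  by rewrite (bigD1 j) //= e mul0r mulr0 ltxx.
have hbC : b \notin C by apply/negP => /inC_p0 e; rewrite e eqxx in hpb.
have [i hi] : exists i, b i \notin Bi i.
  case: (pickP (fun i => b i \notin Bi i)) => [i hi|hn]; first by exists i.
  by case/negP: hbC; apply/hB => i; have := hn i => /negbFE.
have hiJ : i \in J.
  case hiJ: (i \in J) => //; exfalso.
  have hxi : 0 < x i (b i).
    have := hfac i; rewrite /deviate hiJ => hne.
    by rewrite lt_def hne (proj1 (hmix i)).
  have : mix [set i] b y \in C.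
    apply: hsupp => k; rewrite mixE inE; case: (eqVneq k i) => [->|] //.
  move/hB => /(_ i); rewrite mixE inE eqxx; by move: hi => /negP.
have hbi : b i = a i.
  have := hfac i; rewrite /deviate hiJ => h; apply/eqP; apply: contraNT h => hne; by rewrite (negbTE hne).
pose t := mix [set i] a y.
have htC : t \notin C.
  apply/negP => /hB /(_ i); rewrite /t mixE inE eqxx -hbi; by move: hi => /negP.
have hpt : p t != 0.
  apply/eqP => e; case/negP: htC; apply: (inC_step hyC e (i:=i)) => k hk.
  by rewrite /t mixE inE (negbTE hk).
have hprop_i : [set i] \proper J.
  by rewrite properEcard sub1set hiJ cards1.
have := hprop _ hprop_i; apply/eqP; rewrite gt_eqF //.
rewrite /pext (bigD1 t) //=.
have hFt : 0 < F [set i] t.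
  rewrite /F mulr_gt0 //; first by rewrite lt_def hpt; have /andP [] := hp t.
  apply: prodr_gt0 => k _; rewrite /deviate /t mixE inE.
  by case: (eqVneq k i) => [->|hk] //=; rewrite eqxx ltr01.
apply: (lt_le_trans hFt); rewrite /F lerDl; apply: sumr_ge0 => c _; exact: hF0.
Qed.

End H.

Unset Implicit Arguments.

Theorem mainTheorem6 (I : finType) (A : I -> finType) (R : realFieldType)
  (hA : forall i : I, (0 < #|A i|)%N)
  (p : profile A -> R) (hp : forall a, 0 <= p a <= 1)
  (a0 : profile A) (ha0 : p a0 = 0) :
  rectangular (component p a0) <->
  (forall x : forall i : I, A i -> R, X_of (component p a0) x ->
     forall (J : {set I}) (a : profile A), ~ is_joint_exit p x J a).
Proof.
split; first exact: rect_NE.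
exact: NE_rect.
Qed.
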